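(* Let $M\ge1$. Given any $k\in\{0\}\times\mathbb{Z}^M_+$ and any $m\in\mathbb{Z}^{M+1}$ with $0\leq m\leq \min\{k,\tilde{k}\}$, there exists a transmission scattering sequence $\mathsf{p}\in\mathsf{S}_M^\prime$ such that $\bigl(\kappa^\prime(\mathsf{p}),\beta^\prime(\mathsf{p})\bigr)=(k,m)$.
   Context: Fix depths $z_{-1}<z_0<\cdots<z_M<z_{M+1}$; $\mathbb{Z}_+$ denotes the nonnegative integers. A transmission scattering sequence is a finite sequence $\mathsf{p}=(\mathsf{p}_0,\ldots,\mathsf{p}_L)$ with $\mathsf{p}_0=z_{-1}$, $\mathsf{p}_L=z_{M+1}$, $\mathsf{p}_i\in\{z_0,\ldots,z_M\}$ for $1\le i\le L-1$, and for every $0\le i\le L-1$ there is $-1\le j\le M$ with $\{\mathsf{p}_i,\mathsf{p}_{i+1}\}=\{z_j,z_{j+1}\}$; $\mathsf{S}_M^\prime$ is the set of these. For $0\le n\le M$, consider the maximal runs of consecutive indices $i$ with $\mathsf{p}_i\in\{z_n,\ldots,z_{M+1}\}$; the last such run (containing index $L$) is called the trunk run. Let $k_n$ be the number of such runs other than the trunk run, and $m_n$ the number of non-trunk runs of length at least 2. Set $\kappa^\prime(\mathsf{p})=(k_0,\ldots,k_M)$ and $\beta^\prime(\mathsf{p})=(m_0,\ldots,m_M)$. (Equivalently, collapsing the Dyck subpaths gives a tree with a distinguished root-to-tip trunk, and $k_n$, $m_n$ count the vertices, resp. branch points, at depth $z_n$ not on the trunk.) Notation: $\tilde{k}=(k_1,\ldots,k_M,0)$;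 $\min$ and $\le$ entrywise; $0$ denotes the zero vector. *)

(* Defs.v *)
From mathcomp Require Import all_boot.
Set Implicit Arguments. Unset Strict Implicit. Unset Printing Implicit Defensive.

(* Depth z_j (-1 <= j <= M+1) is encoded by the natural number j+1
   (so z_{-1} ~ 0, z_n ~ n+1, z_{M+1} ~ M+2). Since z_{-1} < ... < z_{M+1}
   are fixed and distinct, a scattering sequence is determined by the
   sequence of indices of its entries. *)

Definition is_transmission (M : nat) (p : seq nat) : Prop :=
  [/\ 1 < size p,
      nth 0 p 0 = 0,
      nth 0 p (size p).-1 = M.+2,
      (forall i, 0 < i < (size p).-1 -> 1 <= nth 0 p i <= M.+1) &
      (forall i, i.+1 < size p ->
         (nth 0 p i.+1 == (nth 0 p i).+1) || (nth 0 p i == (nth 0 p i.+1).+1))].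

Fixpoint runs_aux (cur : nat) (s : seq bool) : seq nat :=
  match s with
  | [::] => if cur is 0 then [::] else [:: cur]
  | true :: s' => runs_aux cur.+1 s'
  | false :: s' => if cur is 0 then runs_aux 0 s' else cur :: runs_aux 0 s'
  end.
Definition runs (s : seq bool) : seq nat := runs_aux 0 s.

Definition nontrunk (r : seq nat) : seq nat := take (size r).-1 r.

(* runs of indices i with p_i in {z_n, ..., z_{M+1}}, i.e. encoded p_i >= n+1 *)
Definition level_runs (n : nat) (p : seq nat) : seq nat :=
  nontrunk (runs [seq n.+1 <= x | x <- p]).

Definition kappa' (M : nat) (p : seq nat) : {ffun 'I_M.+1 -> nat} :=
  [ffun n : 'I_M.+1 => size (level_runs n p)].
Definition beta' (M : nat) (p : seq nat) : {ffun 'I_M.+1 -> nat} :=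
  [ffun n : 'I_M.+1 => count (fun l => 1 < l) (level_runs n p)].

Definition ktilde (M : nat) (k : {ffun 'I_M.+1 -> nat}) (n : 'I_M.+1) : nat :=
  if n < M then k (inord n.+1) else 0.

(* Main.v *)
Require Import Defs.
From mathcomp Require Import all_boot zify.
Set Implicit Arguments. Unset Strict Implicit. Unset Printing Implicit Defensive.

Lemma runs_cat c s t : runs_aux c (s ++ false :: t) = runs_aux c s ++ runs_aux 0 t.
Proof. by elim: s c => [|[] s IH] c /=; [case: c | rewrite IH | case: c => [|c]; rewrite ?IH]. Qed.

Lemma runs_rcons_false c s : runs_aux c (s ++ [:: false]) = runs_aux c s.
Proof. by rewrite runs_cat cats0. Qed.

Lemma runs_true c s : all id s -> runs_aux c s = if c + size s is 0 then [::] else [:: c + size s].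
Proof.
elim: s c => [|b s IH] c /=; first by rewrite addn0; case: c.
by case/andP=> -> /IH ->; rewrite addSnnS.
Qed.

Fixpoint tower (v h : nat) : seq nat :=
  if h is h'.+1 then v.+1 :: tower v.+1 h' ++ [:: v] else [::].

Lemma tower_bounds v h : all (fun x => v <= x <= v + h) (tower v h).
Proof.
elim: h v => [|h IH] v //=.
rewrite addnS ltnS leqnSn leq_addr /= all_cat /= leqnn ltnW ?ltnS ?leq_addr // andbT.
rewrite !andbT; move: (IH v.+1); apply: sub_all => x /andP[h1 h2].
rewrite (ltnW h1) /=; move: h2; rewrite addSn; done.
Qed.

Lemma size_tower v h : size (tower v h) = h.*2.
Proof. by elim: h v => [|h IH] v //=; rewrite size_cat IH /= addn1 doubleS. Qed.

Lemma tower_runs l v h : v <= l ->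
  runs_aux 0 (map (fun x => l < x) (tower v h)) =
  if l < v + h then [:: (v + h - l).*2.-1] else [::].
Proof.
elim: h v => [|h IH] v hv /=; first by rewrite addn0 ltnNge hv.
rewrite map_cat /= [l < v]ltnNge hv /= !runs_rcons_false.
case: (ltnP v l) => hvl.
  by rewrite ltnS leqNgt hvl /= IH // addnS addSn.
have el : l = v by apply/eqP; rewrite eqn_leq hv hvl.
subst l; rewrite ltnSn /= runs_true.
  rewrite size_map size_tower addnS ltnS leq_addr addSn subSn ?leq_addr // addKn /=.
  by rewrite add0n.
apply/allP => b /mapP[x hx ->].
by move: (allP (tower_bounds v.+1 h) x hx) => /andP[].
Qed.

Definition tr (l v h : nat) : seq nat := if l < v + h then [:: (v + h - l).*2.-1] else [::].

Lemma tower_cat_runs l v h r : v <= l ->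
  runs_aux 0 (map (fun x => l < x) (tower v h ++ r)) =
  tr l v h ++ runs_aux 0 (map (fun x => l < x) r).
Proof.
move=> hv; rewrite /tr -tower_runs //.
case: h => [|h] //=.
rewrite -catA /= map_cat /= [l < v]ltnNge hv /=.
rewrite map_cat /= [l < v]ltnNge hv /=.
by case: ifP => _; rewrite !runs_cat /= cats0.
Qed.

Lemma tws_runs l v (T : Type) (s : seq T) (g : T -> nat) r : v <= l ->
  runs_aux 0 (map (fun x => l < x) (flatten [seq tower v (g j) | j <- s] ++ r)) =
  flatten [seq tr l v (g j) | j <- s] ++ runs_aux 0 (map (fun x => l < x) r).
Proof.
move=> hv; elim: s => [|j s IH] //=.
by rewrite -catA tower_cat_runs // IH catA.
Qed.

Definition ext (M : nat) (f : {ffun 'I_M.+1 -> nat}) (n : nat) : nat :=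
  if n <= M then f (inord n) else 0.

Definition ht M (m : {ffun 'I_M.+1 -> nat}) (v j : nat) : nat :=
  (find (fun n => ext m n <= j) (index_iota v M.+1)).+1.

Definition tw M (k m : {ffun 'I_M.+1 -> nat}) (v : nat) : seq nat :=
  flatten [seq tower v (ht m v j) | j <- index_iota (ext m v.-1) (ext k v)].

Definition trw M (k m : {ffun 'I_M.+1 -> nat}) (l v : nat) : seq nat :=
  flatten [seq tr l v (ht m v j) | j <- index_iota (ext m v.-1) (ext k v)].

Fixpoint trk M (k m : {ffun 'I_M.+1 -> nat}) (v n : nat) : seq nat :=
  if n is n'.+1 then v :: tw k m v ++ trk k m v.+1 n' else [::].

Lemma dummy : True. Proof. by []. Qed.
Lemma trk_cat M (k m : {ffun 'I_M.+1 -> nat}) v a b :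
  trk k m v (a + b) = trk k m v a ++ trk k m (v + a) b.
Proof.
elim: a v => [|a IH] v /=; first by rewrite addn0.
by rewrite IH -catA addnS.
Qed.

Lemma trk_runs M (k m : {ffun 'I_M.+1 -> nat}) l v n r : v + n <= l.+1 ->
  runs_aux 0 (map (fun x => l < x) (trk k m v n ++ r)) =
  flatten [seq trw k m l w | w <- iota v n] ++ runs_aux 0 (map (fun x => l < x) r).
Proof.
elim: n v => [|n IH] v //= hv.
have hvl : v <= l by apply: leq_trans (leq_addr n v) _; rewrite -ltnS -addnS.
rewrite [l < v]ltnNge hvl /= -catA tws_runs // IH; last by rewrite addSnnS.
by rewrite catA.

Qed.

Lemma tw_ge M (k m : {ffun 'I_M.+1 -> nat}) v : all (fun x => v <= x) (tw k m v).
Proof.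
rewrite /tw; elim: (index_iota _ _) => [|j s IH] //=.
rewrite all_cat IH andbT; move: (tower_bounds v (ht m v j)); apply: sub_all.
by move=> x /andP[].
Qed.

Lemma trk_ge M (k m : {ffun 'I_M.+1 -> nat}) v n : all (fun x => v <= x) (trk k m v n).
Proof.
elim: n v => [|n IH] v //=; rewrite leqnn all_cat tw_ge /=.
by move: (IH v.+1); apply: sub_all => x; apply: ltnW.
Qed.

Definition pth M (k m : {ffun 'I_M.+1 -> nat}) : seq nat := 0 :: trk k m 1 M.+1 ++ [:: M.+2].

Lemma level_runs_pth M (k m : {ffun 'I_M.+1 -> nat}) l : l <= M ->
  level_runs l (pth k m) = flatten [seq trw k m l w | w <- iota 1 l].
Proof.
move=> hl; rewrite /level_runs /runs /pth.
have -> : trk k m 1 M.+1 = trk k m 1 l ++ trk k m (1 + l) (M.+1 - l).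
  by rewrite -trk_cat subnKC // ltnW.
have rf : forall s, runs_aux 0 (false :: s) = runs_aux 0 s by [].
rewrite map_cons ltn0 rf -catA trk_runs // runs_true.
  rewrite add0n size_map size_cat addn1 /nontrunk size_cat /= addn1 /=.
  by rewrite take_size_cat.
rewrite all_map all_cat /= ltnS (leq_trans hl) // !andbT.
move: (trk_ge k m (1 + l) (M.+1 - l)); apply: sub_all => x.
by rewrite add1n.
Qed.

Definition A M (m : {ffun 'I_M.+1 -> nat}) (v l j : nat) : bool :=
  all (fun n => j < ext m n) (index_iota v l).

Lemma ht_spec M (m : {ffun 'I_M.+1 -> nat}) v l j : v <= l <= M.+1 ->
  (l < v + ht m v j) = A m v l j.
Proof.
case/andP=> hvl hlM.
rewrite /ht /A addnS ltnS -leq_subLR leqNgt -has_take_leq; last first.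
  by rewrite size_iota leq_sub2r.
rewrite -all_predC /index_iota take_iota (minn_idPl (leq_sub2r v hlM)).
by apply: eq_all => n /=; rewrite ltnNge.
Qed.

Lemma size_flatten_map (T : Type) (s : seq T) (F : T -> seq nat) :
  size (flatten [seq F x | x <- s]) = \sum_(x <- s) size (F x).
Proof. by elim: s => [|x s IH] /=; rewrite ?big_nil ?big_cons // size_cat IH. Qed.

Lemma count_flatten_map (T : Type) (s : seq T) (F : T -> seq nat) (P : pred nat) :
  count P (flatten [seq F x | x <- s]) = \sum_(x <- s) count P (F x).
Proof. by elim: s => [|x s IH] /=; rewrite ?big_nil ?big_cons // count_cat IH. Qed.

Lemma sum_lt_P K c (P : pred nat) : c <= K ->
  \sum_(0 <= j < K) ((j < c) && P j) = \sum_(0 <= j < c) P j.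
Proof.
move=> hc; rewrite (big_cat_nat (leq0n c) hc) /=.
rewrite [X in _ + X = _]big1_seq ?addn0.
  by apply: eq_big_nat => j /andP[_ ->].
by move=> j /andP[_]; rewrite mem_index_iota => /andP[h _]; rewrite leqNgt in h; rewrite (negbTE h).
Qed.

Lemma countX M (k m : {ffun 'I_M.+1 -> nat}) (hk0 : ext k 0 = 0)
  (h1 : forall n, n <= M -> ext m n <= ext k n)
  (h2 : forall n, n < M -> ext m n <= ext k n.+1) :
  forall l, l <= M -> forall P : pred nat,
  \sum_(1 <= v < l.+1) \sum_(ext m v.-1 <= j < ext k v) (A m v l j && P j) =
  \sum_(0 <= j < ext k l) P j.
Proof.
elim=> [|l IH] hl P.
  by rewrite hk0 !big_geq.
rewrite big_nat_recr //=.
have e1 : \sum_(1 <= v < l.+1) \sum_(ext m v.-1 <= j < ext k v) (A m v l.+1 j && P j) =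
    \sum_(1 <= v < l.+1) \sum_(ext m v.-1 <= j < ext k v) (A m v l j && ((j < ext m l) && P j)).
  apply: eq_big_nat => v /andP[_ hv]; apply: eq_bigr => j _.
  rewrite /A /index_iota; have -> : l.+1 - v = (l - v) + 1 by rewrite addn1 subSn.
  rewrite iotaD all_cat subnKC //= andbT.
  by rewrite andbA.
rewrite e1 IH ?(ltnW hl) // sum_lt_P ?h1 ?(ltnW hl) //.
rewrite /A /index_iota subnn /=.
rewrite (big_cat_nat (leq0n (ext m l)) (h2 _ hl)) /=.
done.
Qed.

Definition st : rel nat := fun x y => (y == x.+1) || (x == y.+1).

Lemma tower_path v h : path st v (tower v h) && (last v (tower v h) == v).
Proof.
elim: h v => [|h IH] v /=; first by rewrite eqxx.
case/andP: (IH v.+1) => hp /eqP hl.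
rewrite cat_path last_cat hp hl /= /st !eqxx orbT /=.
by [].
Qed.

Lemma tws_path (T : Type) (s : seq T) (g : T -> nat) v :
  path st v (flatten [seq tower v (g j) | j <- s]) &&
  (last v (flatten [seq tower v (g j) | j <- s]) == v).
Proof.
elim: s => [|j s IH] /=; first by rewrite eqxx.
case/andP: (tower_path v (g j)) => hp /eqP hl.
by rewrite cat_path last_cat hp hl.
Qed.

Lemma trk_path M (k m : {ffun 'I_M.+1 -> nat}) u n :
  path st u (trk k m u.+1 n) && (last u (trk k m u.+1 n) == u + n).
Proof.
elim: n u => [|n IH] u /=; first by rewrite addn0 eqxx.
case/andP: (tws_path (index_iota (ext m u.+1.-1) (ext k u.+1)) (ht m u.+1) u.+1) => hp /eqP hl.
case/andP: (IH u.+1) => hp2 /eqP hl2.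
rewrite /st eqxx /= cat_path last_cat /tw hp hl hp2 hl2 /=.
by rewrite addSnnS.
Qed.

Lemma A_S M (m : {ffun 'I_M.+1 -> nat}) v l j : v <= l ->
  A m v l.+1 j = A m v l j && (j < ext m l).
Proof.
move=> hv; rewrite /A /index_iota.
have -> : l.+1 - v = (l - v) + 1 by rewrite addn1 subSn.
by rewrite iotaD all_cat subnKC //= andbT.
Qed.

Lemma ht_bound M (m : {ffun 'I_M.+1 -> nat}) v j : ext m M = 0 -> v <= M ->
  v + ht m v j <= M.+1.
Proof.
move=> hM hv; rewrite leqNgt ht_spec; last by rewrite leqnn andbT (leq_trans hv).
rewrite A_S // hM ltn0 andbF //.
Qed.

Lemma tw_bounds M (k m : {ffun 'I_M.+1 -> nat}) v : ext m M = 0 -> v <= M.+1 ->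
  all (fun x => v <= x <= M.+1) (tw k m v).
Proof.
move=> hM hv; rewrite /tw.
case: (ltnP M v) => hvM.
  have -> : ext k v = 0 by rewrite /ext leqNgt hvM.
  by rewrite /index_iota sub0n.
elim: (index_iota _ _) => [|j s IH] //=.
rewrite all_cat IH andbT; move: (tower_bounds v (ht m v j)); apply: sub_all.
move=> x /andP[-> h] /=; exact: leq_trans h (ht_bound j hM hvM).
Qed.

Lemma trk_bounds M (k m : {ffun 'I_M.+1 -> nat}) v n : ext m M = 0 -> 1 <= v ->
  v + n <= M.+2 -> all (fun x => 1 <= x <= M.+1) (trk k m v n).
Proof.
move=> hM; elim: n v => [|n IH] v hv hvn //=.
have hvM : v <= M.+1 by rewrite -ltnS (leq_trans _ hvn) // addnS ltnS leq_addr.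
rewrite hv hvM all_cat IH ?andbT //; last by rewrite addSnnS.
move: (tw_bounds k hM hvM); apply: sub_all => x /andP[h ->].
by rewrite (leq_trans hv h).
Qed.

Lemma size_tr l v h : size (tr l v h) = (l < v + h).
Proof. by rewrite /tr; case: ifP. Qed.

Lemma count_tr l v h : count (fun x => 1 < x) (tr l v h) = (l.+1 < v + h).
Proof.
rewrite /tr; case: ifP => h1 /=.
  rewrite addn0; congr nat_of_bool; rewrite -!muln2; apply/idP/idP => H; lia.
by case: (ltnP l.+1 (v + h)) => // H; move: h1; rewrite (ltnW H).
Qed.

Theorem proposition2 (M : nat) (hM : 1 <= M)
    (k m : {ffun 'I_M.+1 -> nat})
    (hk0 : k ord0 = 0)
    (hm : forall n : 'I_M.+1, m n <= minn (k n) (ktilde k n)) :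
  exists p : seq nat, is_transmission M p /\ kappa' M p = k /\ beta' M p = m.
Proof.
have hk0' : ext k 0 = 0.
  rewrite /ext; have -> : (inord 0 : 'I_M.+1) = ord0 by apply: val_inj; rewrite /= inordK.
  by rewrite hk0; case: (0 <= M).
have h1 : forall n, n <= M -> ext m n <= ext k n.
  move=> n hn; rewrite /ext hn; exact: leq_trans (hm _) (geq_minl _ _).
have h2 : forall n, n < M -> ext m n <= ext k n.+1.
  move=> n hn; rewrite /ext hn (ltnW hn); apply: leq_trans (hm _) _.
  by rewrite /ktilde inordK ?ltnS ?(ltnW hn) // hn geq_minr.
have hmM : ext m M = 0.
  apply/eqP; rewrite -leqn0 /ext leqnn; apply: leq_trans (hm _) _.
  by rewrite /ktilde inordK // ltnn geq_minr.
have iotaE : forall l, iota 1 l = index_iota 1 l.+1.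
  by move=> l; rewrite /index_iota subSS subn0.
have extE : forall (f : {ffun 'I_M.+1 -> nat}) (n : 'I_M.+1), ext f n = f n.
  by move=> f n; rewrite /ext -ltnS ltn_ord inord_val.
exists (pth k m); split; [|split].
- rewrite /is_transmission /pth.
  have hb : all (fun x => 1 <= x <= M.+1) (trk k m 1 M.+1).
    by apply: trk_bounds; rewrite ?hmM.
  have hpath : path st 0 (trk k m 1 M.+1 ++ [:: M.+2]).
    case/andP: (trk_path k m 0 M.+1) => hp /eqP hl.
    by rewrite cat_path hp hl /= /st add0n eqxx.
  move: (trk k m 1 M.+1) hb hpath => q hb hpath.
  split.
  + by rewrite /= size_cat addn1.
  + by [].
  + by rewrite /= size_cat addn1 /= nth_cat ltnn subnn.
  + case=> [|i] // /andP[_ hi] /=.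
    move: hi; rewrite /= size_cat addn1 /= ltnS => hi.
    rewrite nth_cat hi.
    exact: (allP hb _ (mem_nth 0 hi)).
  + move=> i hi; have := (pathP 0 hpath) i; rewrite /st /=.
    by apply; rewrite -ltnS.
- apply/ffunP => n; have hn : (n : nat) <= M by rewrite -ltnS ltn_ord.
  rewrite ffunE -extE (level_runs_pth _ _ hn).
  rewrite size_flatten_map iotaE.
  have -> : ext k n = \sum_(1 <= v < n.+1) \sum_(ext m v.-1 <= j < ext k v)
              (A m v n j && predT j).
    rewrite (countX hk0' h1 h2 hn).
    rewrite (eq_bigr (fun=> 1)); last by [].
    by rewrite sum_nat_const_nat subn0 muln1.
  apply: eq_big_nat => v /andP[hv1 hv2]; rewrite size_flatten_map.
  apply: eq_bigr => j _; rewrite size_tr ht_spec ?andbT //.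
  by rewrite -ltnS hv2 /= (leq_trans hn) // ltnW.
- apply/ffunP => n; have hn : (n : nat) <= M by rewrite -ltnS ltn_ord.
  rewrite ffunE -extE (level_runs_pth _ _ hn).
  rewrite count_flatten_map iotaE.
  have -> : ext m n = \sum_(1 <= v < n.+1) \sum_(ext m v.-1 <= j < ext k v)
              (A m v n j && ((j < ext m n) && predT j)).
    rewrite (countX hk0' h1 h2 hn) (sum_lt_P _ (h1 _ hn)).
    rewrite (eq_bigr (fun=> 1)); last by [].
    by rewrite sum_nat_const_nat subn0 muln1.
  apply: eq_big_nat => v /andP[hv1 hv2]; rewrite count_flatten_map.
  have hvn : v <= n by rewrite -ltnS.
  apply: eq_bigr => j _; rewrite count_tr ht_spec; last by rewrite ltnS hn andbT ltnW.
  by rewrite (A_S _ _ hvn) andbT.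
Qed.
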